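(* Let $R>0$ and let $A\subset\mathbb{R}^d$ be such that $A$ and $\overline{A^c}$ are $R$-supported bodies. If $a_0\in\partial A\cap\partial\overline{A^c}$, then there exist $y_0,y_1\in\mathbb{R}^d$ such that (i) $B(y_0)\subset A^c$ and $B(y_1)\subset(\overline{A^c})^c=\operatorname{int}(A)$; (ii) $B(y_0)\cap B(y_1)=\emptyset$ and $\partial B(y_0)\cap\partial B(y_1)=\{a_0\}$.
   Context: A body is a nonempty closed subset of $\mathbb{R}^d$; $A^c=\mathbb{R}^d\setminus A$, $\overline{X}$ denotes closure; $B(x)=\{y:|y-x|<R\}$; $S^{d-1}$ the unit sphere. For a body $A$ and $a\in\partial A$, $\mathcal{N}_R(A,a)=\{v\in S^{d-1}: A\cap B(a+Rv)=\emptyset\}$; $A$ is $R$-supported if $\mathcal{N}_R(A,a)\ne\emptyset$ for all $a\in\partial A$. *)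

(* Defs.v *)
(* points of R^d are row vectors 'rV[R]_d over R : realType,
   with the Euclidean norm defined explicitly. Subsets are predicates. *)
From mathcomp Require Import all_boot all_order all_algebra.
From mathcomp Require Import reals.
Set Implicit Arguments. Unset Strict Implicit. Unset Printing Implicit Defensive.
Import Order.TTheory GRing.Theory Num.Theory.
Local Open Scope ring_scope.

Section Defs.
Variables (R : realType) (d : nat).
Local Notation pt := 'rV[R]_d.

Definition enorm (x : pt) : R := Num.sqrt (\sum_(i < d) (x 0 i) ^+ 2).
Definition edist (x y : pt) : R := enorm (x - y).

Definition oball (r : R) (x : pt) : pt -> Prop := fun y => edist y x < r.

Definition compl (A : pt -> Prop) : pt -> Prop := fun x => ~ A x.

Definition eclosure (A : pt -> Prop) : pt -> Prop :=
  fun x => forall e : R, 0 < e -> exists a, A a /\ edist x a < e.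

Definition eclosed (A : pt -> Prop) : Prop := forall x, eclosure A x -> A x.

Definition bdry (A : pt -> Prop) : pt -> Prop :=
  fun x => eclosure A x /\ eclosure (compl A) x.

Definition body (A : pt -> Prop) : Prop := (exists a, A a) /\ eclosed A.

Definition unit_sphere : pt -> Prop := fun v => enorm v = 1.

Definition normal_cone (r : R) (A : pt -> Prop) (a : pt) : pt -> Prop :=
  fun v => unit_sphere v /\ (forall y, ~ (A y /\ oball r (a + r *: v) y)).

Definition R_supported (r : R) (A : pt -> Prop) : Prop :=
  body A /\ forall a, bdry A a -> exists v, normal_cone r A a v.

End Defs.

(* Main.v *)
Require Import Defs.
From mathcomp Require Import all_boot all_order all_algebra.
From mathcomp Require Import reals.
From mathcomp Require Import ring lra.
Import Order.TTheory GRing.Theory Num.Theory.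
Set Implicit Arguments. Unset Strict Implicit.
Local Open Scope ring_scope.

Section H.
Variables (R : realType) (d : nat).
Implicit Types (x u w p q : 'rV[R]_d).

Definition ns x : R := \sum_(i < d) (x 0 i) ^+ 2.

Lemma ns_ge0 x : 0 <= ns x.
Proof. by apply: sumr_ge0 => i _; rewrite sqr_ge0. Qed.

Lemma enormE x : enorm x = Num.sqrt (ns x).
Proof. by []. Qed.

Lemma enorm_ge0 x : 0 <= enorm x.
Proof. exact: sqrtr_ge0. Qed.

Lemma enorm_sq x : enorm x ^+ 2 = ns x.
Proof. by rewrite enormE sqr_sqrtr // ns_ge0. Qed.

Lemma ns_eq0 x : ns x = 0 -> x = 0.
Proof.
move=> h; apply/rowP => i; rewrite mxE.
have := psumr_eq0P (fun i _ => sqr_ge0 (x 0 i)) h (i := i) isT.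
by move/eqP; rewrite sqrf_eq0 => /eqP.
Qed.

Lemma nsZ c x : ns (c *: x) = c ^+ 2 * ns x.
Proof. rewrite /ns mulr_sumr; apply: eq_bigr => i _; rewrite mxE; ring. Qed.

Lemma nsN x : ns (- x) = ns x.
Proof. by rewrite -scaleN1r nsZ; ring. Qed.

Lemma ns_sym x y : ns (x - y) = ns (y - x).
Proof. by rewrite -nsN opprB. Qed.

Lemma ns_par p q : ns (p + q) + ns (p - q) = 2 * ns p + 2 * ns q.
Proof.
rewrite /ns -big_split !mulr_sumr -big_split; apply: eq_bigr => i _ /=.
rewrite !mxE; ring.
Qed.

Lemma ns_amgm s u w : 0 < s -> ns (u + w) <= (1 + s) * ns u + (1 + s^-1) * ns w.
Proof.
move=> hs; rewrite /ns !mulr_sumr -big_split; apply: ler_sum => i _ /=.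
rewrite !mxE.
set a := u 0 i; set b := w 0 i.
have e : (1 + s) * a ^+ 2 + (1 + s^-1) * b ^+ 2 - (a + b) ^+ 2 = (s * a - b) ^+ 2 / s.
  by field; rewrite gt_eqF.
rewrite -subr_ge0 e; apply: divr_ge0; [exact: sqr_ge0| exact: ltW].
Qed.

Lemma enorm0 : enorm (0 : 'rV[R]_d) = 0.
Proof. apply/eqP; rewrite enormE sqrtr_eq0 /ns big1 // => i _; rewrite mxE; ring. Qed.

Lemma enorm_eq0 x : enorm x = 0 -> x = 0.
Proof. by move=> h; apply: ns_eq0; rewrite -enorm_sq h expr0n. Qed.

Lemma enorm_tri u w : enorm (u + w) <= enorm u + enorm w.
Proof.
have [eu|eu] := eqVneq (enorm u) 0.
  by rewrite (enorm_eq0 eu) add0r enorm0 add0r.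
have [ew|ew] := eqVneq (enorm w) 0.
  by rewrite (enorm_eq0 ew) addr0 enorm0 addr0.
have pu : 0 < enorm u by rewrite lt_def eu enorm_ge0.
have pw : 0 < enorm w by rewrite lt_def ew enorm_ge0.
rewrite enormE -(ger0_norm (addr_ge0 (enorm_ge0 u) (enorm_ge0 w))) -sqrtr_sqr.
rewrite ler_sqrt ?sqr_ge0 //.
have hh := ns_amgm u w (divr_gt0 pw pu).
apply: (le_trans hh).
rewrite -!enorm_sq.
set a := enorm u; set b := enorm w.
have -> : (1 + b / a) * a ^+ 2 + (1 + (b / a)^-1) * b ^+ 2 = (a + b) ^+ 2.
  by field; rewrite ?gt_eqF.
by [].
Qed.

Lemma lt_en x e : 0 < e -> (enorm x < e) = (ns x < e ^+ 2).
Proof.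
move=> he; rewrite enormE -{1}(gtr0_norm he) -sqrtr_sqr ltr_sqrt //.
by rewrite exprn_gt0.
Qed.

Lemma le_en x e : 0 <= e -> (enorm x <= e) = (ns x <= e ^+ 2).
Proof.
move=> he; rewrite enormE -{1}(ger0_norm he) -sqrtr_sqr ler_sqrt //.
by rewrite sqr_ge0.
Qed.



Lemma clos_ball r y x : eclosure (oball r y) x -> enorm (x - y) <= r.
Proof.
move=> H; apply/ler_addgt0Pr => e he.
have [a [ha hxa]] := H e he.
have -> : x - y = (x - a) + (a - y) by rewrite addrA subrK.
apply: (le_trans (enorm_tri _ _)); rewrite addrC; apply: ltW.
by apply: ltrD.
Qed.

Lemma aux_ineq (t r e : R) : 0 < t -> t < 1 -> 0 < r -> t * r < e -> (1 - t) ^+ 2 * r ^+ 2 < r ^+ 2 /\ t ^+ 2 * r ^+ 2 < e ^+ 2.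
Proof.
move=> h0 h1 hr htr. rewrite !expr2. split.
have h2 : 0 < t * (1 - t) by apply: mulr_gt0; lra.
have h3 : 0 < (t * (2 - t)) * (r * r) by apply: mulr_gt0; [apply: mulr_gt0; lra| apply: mulr_gt0].
nra.
have h4 : 0 < t * r by apply: mulr_gt0.
nra.
Qed.

Lemma sphere_bdry r y x : 0 < r -> ns (x - y) = r ^+ 2 -> bdry (oball r y) x.
Proof.
move=> hr hx; split.
  move=> e he; set t := e / (e + r).
  have ht0 : 0 < t by rewrite divr_gt0 // addr_gt0.
  have ht1 : t < 1 by rewrite ltr_pdivrMr ?addr_gt0 // mul1r ltrDl.
  have htr : t * r < e.
    rewrite /t mulrAC ltr_pdivrMr ?addr_gt0 //. by rewrite mulrDr ltrDr mulr_gt0.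
  have [hA hB] := aux_ineq ht0 ht1 hr htr.
  exists (x + t *: (y - x)); split.
    rewrite /oball /edist lt_en //.
    have -> : x + t *: (y - x) - y = (1 - t) *: (x - y).
      by apply/rowP => i; rewrite !mxE; ring.
    by rewrite nsZ hx.
  rewrite /edist lt_en //.
  have -> : x - (x + t *: (y - x)) = t *: (x - y).
    by apply/rowP => i; rewrite !mxE; ring.
  by rewrite nsZ hx.
move=> e he; exists x; split.
  by rewrite /compl /oball /edist lt_en // hx ltxx.
by rewrite /edist subrr enorm0.
Qed.

End H.

Lemma aux2 (R : realType) (r X : R) : 0 < r -> X < 4 -> (r / 2) ^+ 2 * X < r ^+ 2.
Proof.
move=> hr hX.
have -> : (r / 2) ^+ 2 * X = r ^+ 2 * (X / 4) by field.
rewrite gtr_pMr ?exprn_gt0 //; lra.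
Qed.

Theorem mainTheorem8 (R : realType) (d : nat) (r : R) (A : 'rV[R]_d -> Prop)
  (hr : 0 < r)
  (hA : R_supported r A)
  (hAc : R_supported r (eclosure (compl A)))
  (a0 : 'rV[R]_d)
  (ha0 : bdry A a0 /\ bdry (eclosure (compl A)) a0) :
  exists y0 y1 : 'rV[R]_d,
    (forall x, oball r y0 x -> compl A x) /\
    (forall x, oball r y1 x -> compl (eclosure (compl A)) x) /\
    (forall x, ~ (oball r y0 x /\ oball r y1 x)) /\
    (forall x, (bdry (oball r y0) x /\ bdry (oball r y1) x) <-> x = a0).
Proof.
case: hA => _ /(_ a0 ha0.1) [v [hv hvA]].
case: hAc => _ /(_ a0 ha0.2) [w [hw hwA]].
have nv : ns v = 1 by rewrite -enorm_sq hv expr1n.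
have nw : ns w = 1 by rewrite -enorm_sq hw expr1n.
have H1 : forall x, oball r (a0 + r *: v) x -> compl A x.
  by move=> x h hx; apply: (hvA x); split.
have H2 : forall x, oball r (a0 + r *: w) x -> compl (eclosure (compl A)) x.
  by move=> x h hx; apply: (hwA x); split.
have H3 : forall x, ~ (oball r (a0 + r *: v) x /\ oball r (a0 + r *: w) x).
  move=> x [h0 h1]; apply: (H2 x h1) => e he; exists x; split; first exact: H1.
  by rewrite /edist subrr enorm0.
have Hw : w = - v.
  have hs : ns (v + w) = 0.
    apply/eqP; rewrite eq_le ns_ge0 andbT; rewrite leNgt; apply/negP => hpos.
    have hp := ns_par v w; rewrite nv nw in hp.
    apply: (H3 (a0 + (r / 2) *: (v + w))); split.
      rewrite /oball /edist lt_en //.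
      have -> : a0 + (r / 2) *: (v + w) - (a0 + r *: v) = (r / 2) *: (w - v).
        by apply/rowP => i; rewrite !mxE; field.
      rewrite nsZ ns_sym.
      have : ns (v - w) < 4 by lra.
      by move=> h4; apply: aux2.
    rewrite /oball /edist lt_en //.
    have -> : a0 + (r / 2) *: (v + w) - (a0 + r *: w) = (r / 2) *: (v - w).
      by apply/rowP => i; rewrite !mxE; field.
    rewrite nsZ.
    have : ns (v - w) < 4 by lra.
    by move=> h4; apply: aux2.
  have := ns_eq0 hs; move/eqP; rewrite addrC addr_eq0 => /eqP //.
subst w.
exists (a0 + r *: v), (a0 + r *: - v); split; first exact: H1.
split; first exact: H2.
split; first exact: H3.
move=> x; split.
  move=> [[c0 _] [c1 _]].
  have e0 : ns (x - (a0 + r *: v)) <= r ^+ 2.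
    by rewrite -le_en; [exact: clos_ball c0 | exact: ltW].
  have e1 : ns (x - (a0 + r *: - v)) <= r ^+ 2.
    by rewrite -le_en; [exact: clos_ball c1 | exact: ltW].
  have E0 : x - (a0 + r *: v) = (x - a0) - r *: v.
    by apply/rowP => i; rewrite !mxE; ring.
  rewrite E0 in e0.
  have E1 : x - (a0 + r *: - v) = (x - a0) + r *: v.
    by apply/rowP => i; rewrite !mxE; ring.
  rewrite E1 in e1.
  have hp := ns_par (x - a0) (r *: v); rewrite nsZ nv in hp.
  have hz : ns (x - a0) = 0.
    apply/eqP; rewrite eq_le ns_ge0 andbT. 
    move: (ns (x - a0 + r *: v)) (ns (x - a0 - r *: v)) (ns (x - a0)) hp e0 e1 => a b c.
    move=> *; lra.
  by apply/eqP; rewrite -subr_eq0; apply/eqP; apply: ns_eq0.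
move=> ->; split; apply: sphere_bdry => //.
  have -> : a0 - (a0 + r *: v) = (- r) *: v by apply/rowP => i; rewrite !mxE; ring.
  by rewrite nsZ nv mulr1 sqrrN.
have -> : a0 - (a0 + r *: - v) = r *: v by apply/rowP => i; rewrite !mxE; ring.
by rewrite nsZ nv mulr1.
Qed.
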